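(* Let $\Sigma$ be a set and let $y,z\in F(\Sigma)$ be such that the word $y^{-1}zy$ is freely reduced and non-trivial, with $z$ cyclically reduced and not a proper power. Then: (1) if $y=1$ and there are $i\in\mathbb{Z}$ and $g,h\in F(\Sigma)$ such that $z^i=gzh$ with the word $g\cdot z\cdot h$ freely reduced, then $i\geq 1$ and $g,h\in\langle z\rangle$; (2) if $y\neq 1$ and there are $i,j\in\mathbb{Z}$ and $g,h\in F(\Sigma)$ such that $y^{-1}z^iy=gy^{-1}z^jyh$ with the word $g\cdot y^{-1}z^jy\cdot h$ freely reduced, then $g=h=1$ and $i=j$.
   Context: $F(\Sigma)$ is the free group on $\Sigma$. An element $w$ is a proper power if $w=u^n$ for some $u\in F(\Sigma)$ and $n\geq 2$. *)

(* Defs.v *)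
(* Free group F(S) on an arbitrary type S, presented by words
   over the letters S x bool (true = generator, false = its inverse),
   modulo free cancellation. *)
From Stdlib Require Import List ZArith Relations.
Import ListNotations.

Definition letter (S : Type) : Type := (S * bool)%type.
Definition word (S : Type) : Type := list (letter S).

Definition inv_letter {S : Type} (x : letter S) : letter S := (fst x, negb (snd x)).

Definition winv {S : Type} (w : word S) : word S := rev (map inv_letter w).

Inductive red_step {S : Type} : word S -> word S -> Prop :=
| red_step_intro : forall (u v : word S) (x : letter S),
    red_step (u ++ x :: inv_letter x :: v) (u ++ v).

Definition fg_eq {S : Type} : word S -> word S -> Prop :=
  clos_refl_sym_trans (word S) red_step.

Definition reduced {S : Type} (w : word S) : Prop :=
  forall (u v : word S) (x : letter S), w <> u ++ x :: inv_letter x :: v.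

Definition cyc_reduced {S : Type} (w : word S) : Prop :=
  reduced w /\ forall (x : letter S) (u : word S), w <> x :: u ++ [inv_letter x].

Definition wpow_nat {S : Type} (w : word S) (n : nat) : word S :=
  concat (repeat w n).

Definition wpow {S : Type} (w : word S) (i : Z) : word S :=
  if (0 <=? i)%Z then wpow_nat w (Z.to_nat i) else wpow_nat (winv w) (Z.to_nat (- i)).

Definition proper_power {S : Type} (w : word S) : Prop :=
  exists (u : word S) (n : nat), (2 <= n)%nat /\ fg_eq w (wpow_nat u n).

Definition in_cyclic {S : Type} (z g : word S) : Prop :=
  exists k : Z, fg_eq g (wpow z k).

(* Main.v *)
Require Import Defs.
From Stdlib Require Import List ZArith Relations Lia ClassicalEpsilon.
Import ListNotations.

Lemma inv_inv {T} (x : letter T) : inv_letter (inv_letter x) = x.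
Proof. destruct x as [s b]; unfold inv_letter; simpl; rewrite Bool.negb_involutive; reflexivity. Qed.

Lemma inv_neq {T} (x : letter T) : inv_letter x <> x.
Proof. destruct x as [s b]; unfold inv_letter; simpl; intro H; injection H; destruct b; discriminate. Qed.

Lemma winv_app {T} (u v : word T) : winv (u ++ v) = winv v ++ winv u.
Proof. unfold winv; rewrite map_app, rev_app_distr; reflexivity. Qed.

Lemma winv_involutive {T} (u : word T): winv (winv u) = u.
Proof. unfold winv; rewrite map_rev, rev_involutive, map_map.
  transitivity (map (fun x => x) u). apply map_ext; intro; apply inv_inv. apply map_id. Qed.

Lemma winv_length {T} (u : word T) : length (winv u) = length u.
Proof. unfold winv; rewrite length_rev, length_map; reflexivity. Qed.

Lemma winv_cons {T} (a : letter T) u : winv (a :: u) = winv u ++ [inv_letter a].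
Proof. reflexivity. Qed.

Lemma app_split_le {A} (a b c d : list A) : a ++ b = c ++ d -> length a <= length c ->
  exists e, c = a ++ e /\ b = e ++ d.
Proof. revert c. induction a as [|x a IH]; intros c H Hl.
  - exists c; auto.
  - destruct c as [|y c]; simpl in Hl. lia. simpl in H; injection H as -> H.
    destruct (IH c H ltac:(lia)) as [e [-> ->]]. exists e; auto. Qed.

Lemma app_eq_len {A} (a b c d : list A) : a ++ b = c ++ d -> length a = length c -> a = c /\ b = d.
Proof. intros H Hl. assert (length a <= length c) as Hle by lia.
  destruct (app_split_le _ _ _ _ H Hle) as [e [Hc Hb]]. subst c.
  rewrite length_app in Hl. destruct e; simpl in Hl.
  rewrite app_nil_r; simpl in Hb; auto. lia. Qed.

Lemma reduced_nil {T} : reduced (@nil (letter T)).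
Proof. intros u v x H. destruct u; discriminate. Qed.

Lemma reduced_cons {T} (a : letter T) w : reduced (a :: w) <->
  reduced w /\ (forall b w', w = b :: w' -> b <> inv_letter a).
Proof. split.
- intros H. split.
  + intros u v x E. apply (H (a :: u) v x). rewrite E; reflexivity.
  + intros b w' E Eb. subst. apply (H [] w' a). reflexivity.
- intros [H1 H2] u v x E. destruct u as [|c u]; simpl in E; injection E as E1 E2.
  + rewrite <- E1 in E2. exact (H2 _ _ E2 eq_refl).
  + exact (H1 u v x E2).
Qed.

Lemma reduced_single {T} (a : letter T) : reduced [a].
Proof. apply reduced_cons; split; [apply reduced_nil| intros; discriminate]. Qed.

Definition headl {T} (w : word T) : option (letter T) := match w with [] => None | a :: _ => Some a end.
Definition lastl {T} (w : word T) := headl (rev w).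
Definition joinable {T} (u v : word T) :=
  forall a b, lastl u = Some a -> headl v = Some b -> b <> inv_letter a.

Lemma lastl_snoc {T} (u : word T) a : lastl (u ++ [a]) = Some a.
Proof. unfold lastl; rewrite rev_app_distr; reflexivity. Qed.
Lemma headl_app {T} (u v : word T) : u <> [] -> headl (u ++ v) = headl u.
Proof. destruct u; [congruence| reflexivity]. Qed.
Lemma lastl_app {T} (u v : word T) : v <> [] -> lastl (u ++ v) = lastl v.
Proof. intros. unfold lastl. rewrite rev_app_distr. destruct (rev v) eqn:E.
  apply (f_equal (@rev _)) in E; rewrite rev_involutive in E; simpl in E; contradiction.
  reflexivity. Qed.
Lemma lastl_some {T} (u : word T) a : lastl u = Some a -> exists u', u = u' ++ [a].
Proof. unfold lastl; destruct (rev u) as [|c l] eqn:E; [discriminate|]. intro H; injection H as ->.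
  exists (rev l). rewrite <- (rev_involutive u), E. reflexivity. Qed.

Lemma headl_some {T} (u : word T) a : headl u = Some a -> exists u', u = a :: u'.
Proof. destruct u; simpl; [discriminate|]. intro H; injection H as ->. eauto. Qed.

Lemma reduced_app_iff {T} (u v : word T) : reduced (u ++ v) <-> reduced u /\ reduced v /\ joinable u v.
Proof. split.
- intros H. split; [|split].
  + intros p q x E. apply (H p (q ++ v) x). rewrite E. rewrite <- app_assoc. reflexivity.
  + intros p q x E. apply (H (u ++ p) q x). rewrite E. rewrite <- app_assoc. reflexivity.
  + intros a b Ha Hb Eb. destruct (lastl_some _ _ Ha) as [u' ->].
    destruct (headl_some _ _ Hb) as [v' ->]. subst b.
    apply (H u' v' a). rewrite <- app_assoc; reflexivity.
- intros [Hu [Hv J]] p q x E. apply app_eq_app in E. destruct E as [l [[E1 E2]|[E1 E2]]].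
  + destruct l as [|c [|d l]].
    * simpl in E2. exact (Hv [] q x (eq_sym E2)).
    * simpl in E2. injection E2 as <- E2. subst u.
      apply (J x (inv_letter x)); [apply lastl_snoc| rewrite <- E2; reflexivity| reflexivity].
    * simpl in E2. injection E2 as <- <- E2. apply (Hu p l x). exact E1.
  + exact (Hv l q x E2).
Qed.

Lemma joinable_r {T} (u v v' : word T) : headl v = headl v' -> joinable u v' -> joinable u v.
Proof. intros E J a b Ha Hb; rewrite E in Hb; eauto. Qed.
Lemma joinable_l {T} (u u' v : word T) : lastl u = lastl u' -> joinable u' v -> joinable u v.
Proof. intros E J a b Ha Hb; rewrite E in Ha; eauto. Qed.

Lemma lastl_winv {T} (u : word T) : lastl (winv u) = option_map inv_letter (headl u).
Proof. destruct u as [|a u]; [reflexivity|]. rewrite winv_cons, lastl_snoc; reflexivity. Qed.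
Lemma headl_winv {T} (u : word T) : headl (winv u) = option_map inv_letter (lastl u).
Proof. unfold lastl, winv. rewrite <- map_rev. destruct (rev u); reflexivity. Qed.

Lemma joinable_winv {T} (u v : word T) : joinable u v -> joinable (winv v) (winv u).
Proof. intros J a b Ha Hb. rewrite lastl_winv in Ha. rewrite headl_winv in Hb.
  destruct (headl v) eqn:E1; [|discriminate]. destruct (lastl u) eqn:E2; [|discriminate].
  simpl in *. injection Ha as <-. injection Hb as <-. intro C.
  apply (J l0 l E2 E1). rewrite C, inv_inv. reflexivity. Qed.

Lemma reduced_winv {T} (u : word T) : reduced u -> reduced (winv u).
Proof. intros H p q x E. apply (H (winv q) (winv p) x).
  rewrite <- (winv_involutive u), E. rewrite winv_app, !winv_cons, inv_inv, <- !app_assoc.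
  reflexivity. Qed.

Lemma cyc_joinable {T} (z : word T) : cyc_reduced z -> joinable z z.
Proof. intros [Hr Hc] a b Ha Hb E. destruct z as [|c z']; [discriminate|].
  simpl in Hb; injection Hb as ->. destruct z' as [|d m].
  - change [b] with ([] ++ [b]) in Ha. rewrite lastl_snoc in Ha. injection Ha as ->.
    exact (inv_neq _ (eq_sym E)).
  - destruct (exists_last (l := d :: m) ltac:(discriminate)) as [m' [e He]]. rewrite He in *.
    change (b :: m' ++ [e]) with ((b :: m') ++ [e]) in Ha. rewrite lastl_snoc in Ha.
    injection Ha as ->. apply (Hc b m'). rewrite E, inv_inv. reflexivity. Qed.

Lemma wpow_nat_S {T} (w : word T) n : wpow_nat w (S n) = w ++ wpow_nat w n.
Proof. reflexivity. Qed.
Lemma wpow_nat_add {T} (w : word T) a b : wpow_nat w (a + b) = wpow_nat w a ++ wpow_nat w b.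
Proof. induction a; [reflexivity|]. simpl plus. rewrite !wpow_nat_S, IHa, app_assoc; reflexivity. Qed.
Lemma wpow_nat_S_r {T} (w : word T) n : wpow_nat w (S n) = wpow_nat w n ++ w.
Proof. rewrite <- Nat.add_1_r, wpow_nat_add. unfold wpow_nat at 2; simpl; rewrite app_nil_r; reflexivity. Qed.
Lemma wpow_nat_length {T} (w : word T) n : length (wpow_nat w n) = n * length w.
Proof. induction n; [reflexivity|]. rewrite wpow_nat_S, length_app, IHn. simpl; lia. Qed.

Lemma headl_pow {T} (Z : word T) n : Z <> [] -> headl (wpow_nat Z (S n)) = headl Z.
Proof. intros. rewrite wpow_nat_S; apply headl_app; auto. Qed.
Lemma lastl_pow {T} (Z : word T) n : Z <> [] -> lastl (wpow_nat Z (S n)) = lastl Z.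
Proof. intros. rewrite wpow_nat_S_r; apply lastl_app; auto. Qed.

Lemma reduced_pow {T} (Z : word T) n : Z <> [] -> reduced Z -> joinable Z Z -> reduced (wpow_nat Z n).
Proof. intros HZ HR J. induction n. apply reduced_nil. rewrite wpow_nat_S.
  apply reduced_app_iff; split; auto. split; auto. destruct n.
  - intros a b _ H; discriminate.
  - apply (joinable_r _ _ Z); auto. apply headl_pow; auto. Qed.

Definition push {T} (a : letter T) (r : word T) : word T :=
  match r with [] => [a] | b :: r' =>
    if excluded_middle_informative (b = inv_letter a) then r' else a :: r end.
Definition nf {T} (w : word T) := fold_right push [] w.

Lemma push_reduced {T} (a : letter T) r : reduced r -> reduced (push a r).
Proof. destruct r as [|b r']; simpl; intros H. apply reduced_single.
  destruct (excluded_middle_informative _). apply reduced_cons in H; tauto.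
  apply reduced_cons; split; auto. intros b' w' E; injection E; intros; subst; auto. Qed.
Lemma nf_reduced {T} (w : word T) : reduced (nf w).
Proof. induction w; simpl; [apply reduced_nil | apply push_reduced; auto]. Qed.
Lemma nf_id {T} (w : word T) : reduced w -> nf w = w.
Proof. induction w as [|a w IH]; intros H; simpl; auto. apply reduced_cons in H as [H1 H2].
  fold (nf w). rewrite IH by auto. destruct w as [|b w']; simpl; auto.
  destruct (excluded_middle_informative _) as [e|n]; auto. exfalso; exact (H2 b w' eq_refl e). Qed.
Lemma push_cancel {T} (x : letter T) r : reduced r -> push x (push (inv_letter x) r) = r.
Proof. intros H. destruct r as [|b r'].
  - simpl. destruct (excluded_middle_informative (inv_letter x = inv_letter x)); [reflexivity|congruence].
  - simpl. destruct (excluded_middle_informative (b = inv_letter (inv_letter x))) as [e|n].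
    + rewrite inv_inv in e. subst b. apply reduced_cons in H as [H1 H2].
      destruct r' as [|c r'']; simpl; auto.
      destruct (excluded_middle_informative (c = inv_letter x)) as [e'|n']; auto.
      exfalso; exact (H2 c r'' eq_refl e').
    + simpl. destruct (excluded_middle_informative (inv_letter x = inv_letter x)); [reflexivity|congruence].
Qed.
Lemma nf_app {T} (u v : word T) : nf (u ++ v) = fold_right push (nf v) u.
Proof. unfold nf; apply fold_right_app. Qed.
Lemma nf_step {T} (u v : word T) : red_step u v -> nf u = nf v.
Proof. intros []. rewrite !nf_app. simpl.
  rewrite push_cancel by apply nf_reduced. reflexivity. Qed.
Lemma nf_fg {T} (u v : word T) : fg_eq u v -> nf u = nf v.
Proof. induction 1; [apply nf_step; auto| reflexivity | auto | congruence]. Qed.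
Lemma fg_reduced_eq {T} (u v : word T) : reduced u -> reduced v -> fg_eq u v -> u = v.
Proof. intros. transitivity (nf u); [symmetry; apply nf_id; auto|].
  transitivity (nf v); [apply nf_fg; auto| apply nf_id; auto]. Qed.
Lemma nf_winv_cancel {T} (y : word T) : reduced y -> fold_right push y (winv y) = [].
Proof. induction y as [|a y IH]; intros H; [reflexivity|].
  rewrite winv_cons, fold_right_app. change (fold_right push (a :: y) [inv_letter a]) with (push (inv_letter a) (a :: y)).
  assert (push (inv_letter a) (a :: y) = y) as ->.
  { simpl. destruct (excluded_middle_informative (a = inv_letter (inv_letter a))) as [e|n]; auto.
    rewrite inv_inv in n; congruence. }
  apply IH. apply reduced_cons in H; tauto. Qed.

Lemma commute_pow {T} (u v : word T) : u ++ v = v ++ u ->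
  exists t a b, u = wpow_nat t a /\ v = wpow_nat t b.
Proof.
  remember (length u + length v) as N. revert u v HeqN.
  induction N as [N IH] using lt_wf_ind. intros u v HN H.
  destruct u as [|c u'].
  { exists v, 0, 1. split; [reflexivity| unfold wpow_nat; simpl; rewrite app_nil_r; reflexivity]. }
  destruct v as [|d v'].
  { exists (c :: u'), 1, 0. split; [unfold wpow_nat; simpl; rewrite app_nil_r; reflexivity|reflexivity]. }
  destruct (Nat.le_ge_cases (length (c::u')) (length (d::v'))) as [Hle|Hge].
  - destruct (app_split_le _ _ _ _ H Hle) as [e [Hv He]].
    assert (length (d :: v') = length (c :: u') + length e) as HL by (rewrite Hv, length_app; reflexivity).
    destruct (IH (length (c :: u') + length e) ltac:(simpl in *; lia) (c :: u') e eq_refl)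
      as [t [a [b [Ha Hb]]]]. { rewrite <- Hv. auto. }
    exists t, a, (a + b). split; auto. rewrite Hv, wpow_nat_add, <- Ha, <- Hb. reflexivity.
  - destruct (app_split_le _ _ _ _ (eq_sym H) Hge) as [e [Hu He]].
    assert (length (c :: u') = length (d :: v') + length e) as HL by (rewrite Hu, length_app; reflexivity).
    destruct (IH (length e + length (d :: v')) ltac:(simpl in *; lia) e (d :: v') eq_refl)
      as [t [a [b [Ha Hb]]]]. { rewrite <- Hu. auto. }
    exists t, (b + a), b. split; auto. rewrite Hu, wpow_nat_add, <- Ha, <- Hb. reflexivity.
Qed.

Lemma np_nonempty {T} (z : word T) : ~ proper_power z -> z <> [].
Proof. intros NP ->. apply NP. exists [], 2. split; [lia| apply rst_refl]. Qed.

Lemma prim {T} (z u v : word T) : ~ proper_power z -> z = u ++ v -> z = v ++ u -> u = [] \/ v = [].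
Proof. intros NP E1 E2. destruct u as [|c u']; [left; reflexivity|].
  destruct v as [|d v']; [right; reflexivity|]. exfalso.
  destruct (commute_pow (c::u') (d::v') ltac:(congruence)) as [t [a [b [Hu Hv]]]].
  apply NP. exists t, (a + b). split.
  - destruct a; [unfold wpow_nat in Hu; simpl in Hu; discriminate|].
    destruct b; [unfold wpow_nat in Hv; simpl in Hv; discriminate|]. lia.
  - rewrite E1, Hu, Hv, <- wpow_nat_add. apply rst_refl.
Qed.

Lemma pal {T} (w : word T) : reduced w -> winv w = w -> w = [].
Proof.
  remember (length w) as N. revert w HeqN.
  induction N as [N IH] using lt_wf_ind. intros w HN H E.
  destruct w as [|a w']; auto. exfalso. destruct w' as [|d m].
  - simpl in E. injection E as E. exact (inv_neq _ E).
  - destruct (exists_last (l := d :: m) ltac:(discriminate)) as [m' [b Hb]]. rewrite Hb in *.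
    rewrite winv_cons, winv_app in E. simpl in E. injection E as E1 E2.
    apply app_inj_tail in E2 as [E2 E3].
    assert (reduced m') as Hm.
    { apply reduced_cons in H as [H _]. apply reduced_app_iff in H; tauto. }
    assert (m' = []) as ->.
    { apply (IH (length m')); auto. subst N. simpl. rewrite length_app. simpl. lia. }
    apply (H [] [] a). simpl. rewrite <- E3. reflexivity.
Qed.

Lemma rot_inv {T} (Z u v : word T) : reduced Z -> Z <> [] -> Z = u ++ v -> winv Z = v ++ u -> False.
Proof. intros HR HZ E1 E2. rewrite E1, winv_app in E2.
  apply app_eq_len in E2; [|rewrite winv_length; reflexivity]. destruct E2 as [Ev Eu]. subst Z.
  apply reduced_app_iff in HR as [Hu [Hv _]]. apply pal in Ev; auto. apply pal in Eu; auto.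
  subst; apply HZ; reflexivity. Qed.

Lemma occ {T} (w : word T) n : forall g z h, g ++ z ++ h = wpow_nat w n -> length z = length w ->
  exists k u v, w = u ++ v /\ z = v ++ u /\ g = wpow_nat w k ++ u.
Proof.
  induction n as [|n IH]; intros g z h E Hl.
  - unfold wpow_nat in E; simpl in E. apply app_eq_nil in E as [-> E]. apply app_eq_nil in E as [-> ->].
    destruct w; [|simpl in Hl; discriminate]. exists 0, [], []. auto.
  - rewrite wpow_nat_S in E. destruct (Nat.le_gt_cases (length w) (length g)) as [Hle|Hgt].
    + destruct (app_split_le _ _ _ _ (eq_sym E) Hle) as [e [Hg He]].
      destruct (IH e z h (eq_sym He) Hl) as [k [u [v [H1 [H2 H3]]]]].
      exists (S k), u, v. split; auto. split; auto. rewrite Hg, H3, wpow_nat_S, app_assoc. reflexivity.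
    + destruct (app_split_le _ _ _ _ E ltac:(lia)) as [e [Hw He]].
      assert (length w = length g + length e) as HL by (rewrite Hw, length_app; reflexivity).
      destruct (app_split_le _ _ _ _ (eq_sym He) ltac:(lia)) as [f [Hz Hf]].
      assert (length z = length e + length f) as HL2 by (rewrite Hz, length_app; reflexivity).
      destruct n as [|n'].
      * unfold wpow_nat in Hf; simpl in Hf. symmetry in Hf. apply app_eq_nil in Hf as [-> ->].
        destruct g; [|simpl in *; lia]. exists 0, [], e. split; [exact Hw| split; [exact Hz| reflexivity]].
      * rewrite wpow_nat_S, Hw, <- app_assoc in Hf.
        apply app_eq_len in Hf as [-> _]; [|lia].
        exists 0, f, e. auto.
Qed.

Lemma wpow_of_nat {T} (z : word T) k : wpow z (Z.of_nat k) = wpow_nat z k.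
Proof. unfold wpow. replace (0 <=? Z.of_nat k)%Z with true by (symmetry; apply Z.leb_le; lia).
  rewrite Nat2Z.id. reflexivity. Qed.

Lemma wpow_cases {T} (z : word T) i : (i = 0%Z /\ wpow z i = []) \/
  exists (n : nat) (b : bool), (1 <= n)%nat /\ wpow z i = wpow_nat (if b then z else winv z) n /\
    i = (if b then Z.of_nat n else (- Z.of_nat n))%Z.
Proof. unfold wpow. destruct (Z.leb_spec 0 i).
  - destruct (Z.eq_dec i 0). left; subst; auto.
    right; exists (Z.to_nat i), true; split; [lia|split; [reflexivity| lia]].
  - right; exists (Z.to_nat (-i)), false; split; [lia|split; [reflexivity| lia]].
Qed.

Lemma step123 {T} (y Z W g h : word T) n m :
  winv y ++ wpow_nat Z n ++ y = g ++ winv y ++ wpow_nat W m ++ y ++ h ->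
  (1 <= m)%nat -> length W = length Z ->
  exists e k u v, g ++ winv y = winv y ++ e /\
    wpow_nat Z n ++ y = e ++ wpow_nat W m ++ y ++ h /\
    Z = u ++ v /\ W = v ++ u /\ e = wpow_nat Z k ++ u.
Proof.
  intros E Hm Hl.
  assert (E' : winv y ++ (wpow_nat Z n ++ y) = (g ++ winv y) ++ (wpow_nat W m ++ y ++ h))
    by (rewrite <- app_assoc; exact E).
  destruct (app_split_le _ _ _ _ E' ltac:(rewrite length_app; lia)) as [e [E1 E2]].
  assert (E3 : (e ++ wpow_nat W m) ++ (y ++ h) = wpow_nat Z n ++ y)
    by (rewrite <- app_assoc; symmetry; exact E2).
  assert (Hlen : length (e ++ wpow_nat W m) <= length (wpow_nat Z n)).
  { apply (f_equal (@length _)) in E2. rewrite !length_app in *. lia. }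
  destruct (app_split_le _ _ _ _ E3 Hlen) as [f [E4 E5]].
  destruct m as [|m']; [lia|]. rewrite wpow_nat_S in E4.
  destruct (occ Z n e W (wpow_nat W m' ++ f)) as [k [u [v [H1 [H2 H3]]]]].
  { rewrite E4, <- !app_assoc; reflexivity. }
  { exact Hl. }
  exists e, k, u, v. auto.
Qed.

Lemma part2_core {T} (y Z g h : word T) n m : y <> [] -> Z <> [] ->
  (forall u v, Z = u ++ v -> Z = v ++ u -> u = [] \/ v = []) ->
  joinable (winv y) Z -> joinable Z y -> (1 <= m)%nat ->
  winv y ++ wpow_nat Z n ++ y = g ++ winv y ++ wpow_nat Z m ++ y ++ h ->
  g = [] /\ h = [] /\ n = m.
Proof.
  intros Hy HZ Hp J1 J2 Hm E.
  destruct (step123 y Z Z g h n m E Hm eq_refl) as [e [k [u [v [E1 [E2 [E3 [E4 E5]]]]]]]].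
  assert (exists k', e = wpow_nat Z k') as [k' Ek].
  { destruct (Hp u v E3 E4) as [-> | ->].
    - exists k. rewrite E5, app_nil_r. reflexivity.
    - exists (S k). rewrite E5, wpow_nat_S_r. rewrite app_nil_r in E3. rewrite <- E3. reflexivity. }
  destruct y as [|a y']; [congruence|].
  destruct k' as [|k''].
  2:{ exfalso. assert (lastl (g ++ winv (a :: y')) = lastl (winv (a :: y') ++ e)) as L by (rewrite E1; reflexivity).
      rewrite lastl_app in L by (rewrite winv_cons; destruct (winv y'); discriminate).
      rewrite (lastl_app _ e) in L by (rewrite Ek, wpow_nat_S; intro C; apply app_eq_nil in C; tauto).
      rewrite Ek, lastl_pow in L by auto. rewrite lastl_winv in L. simpl in L.
      apply (J2 (inv_letter a) a (eq_sym L) eq_refl). rewrite inv_inv. reflexivity. }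
  unfold wpow_nat in Ek; simpl in Ek. rewrite Ek in E1, E2. clear E5 Ek.
  idtac.
  assert (g = []) as ->.
  { apply (f_equal (@length _)) in E1. rewrite !length_app in E1. destruct g; simpl in *; [reflexivity|]. lia. }
  simpl in E2.
  assert (Hnm : m <= n).
  { apply (f_equal (@length _)) in E2. rewrite !length_app, !wpow_nat_length in E2.
    destruct Z; [congruence|]. simpl in E2. rewrite length_app in E2. destruct (Nat.le_gt_cases m n); auto. assert (n * S (length Z) < m * S (length Z)) by (apply Nat.mul_lt_mono_pos_r; lia). lia. }
  replace n with (m + (n - m)) in E2 by lia. rewrite wpow_nat_add, <- app_assoc in E2.
  apply app_inv_head in E2.
  destruct (n - m) as [|r] eqn:Er.
  - unfold wpow_nat in E2; simpl in E2. split; [reflexivity|split;[|lia]].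
    apply (f_equal (@length _)) in E2. simpl in E2. rewrite length_app in E2. destruct h; simpl in *; [reflexivity|lia].
  - exfalso. rewrite wpow_nat_S, <- app_assoc in E2.
    assert (headl (Z ++ wpow_nat Z r ++ a :: y') = headl ((a :: y') ++ h)) as Hh by (rewrite E2; reflexivity).
    rewrite headl_app in Hh by auto. simpl in Hh.
    apply (J1 (inv_letter a) a); [rewrite lastl_winv; reflexivity| exact Hh| rewrite inv_inv; reflexivity].
Qed.

Lemma zb_facts {T} (z : word T) (b : bool) : cyc_reduced z -> ~ proper_power z ->
  let Z := (if b then z else winv z) in
  Z <> [] /\ reduced Z /\ joinable Z Z /\
  (forall u v, Z = u ++ v -> Z = v ++ u -> u = [] \/ v = []).
Proof.
  intros Hc NP Z. pose proof (np_nonempty z NP) as Hne. pose proof (cyc_joinable z Hc) as J.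
  destruct Hc as [Hr _]. destruct b; subst Z.
  - split; auto. split; auto. split; auto. intros u v E1 E2. exact (prim z u v NP E1 E2).
  - split. { intro C. apply Hne. rewrite <- (winv_involutive z), C. reflexivity. }
    split. { apply reduced_winv; auto. }
    split. { apply joinable_winv; auto. }
    intros u v E1 E2.
    assert (z = winv v ++ winv u) as F1 by (rewrite <- (winv_involutive z), E1, winv_app; reflexivity).
    assert (z = winv u ++ winv v) as F2 by (rewrite <- (winv_involutive z), E2, winv_app; reflexivity).
    destruct (prim z (winv v) (winv u) NP F1 F2) as [C|C];
      [right|left]; rewrite <- (winv_involutive _), C; reflexivity.
Qed.

Lemma reduced_conj {T} (y Z : word T) n : reduced y -> Z <> [] -> reduced Z -> joinable Z Z ->
  joinable (winv y) Z -> joinable Z y -> (1 <= n)%nat -> reduced (winv y ++ wpow_nat Z n ++ y).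
Proof.
  intros Hy HZ HR J J1 J2 Hn. destruct n as [|n]; [lia|].
  apply reduced_app_iff. split; [apply reduced_winv; auto|]. split.
  - apply reduced_app_iff. split; [apply reduced_pow; auto|]. split; auto.
    apply (joinable_l _ Z); auto. apply lastl_pow; auto.
  - apply (joinable_r _ _ Z); auto. rewrite wpow_nat_S, <- app_assoc. apply headl_app; auto.
Qed.

Theorem lemma2p1 (S : Type) (y z : word S) :
  reduced y -> reduced z ->
  reduced (winv y ++ z ++ y) -> winv y ++ z ++ y <> [] ->
  cyc_reduced z -> ~ proper_power z ->
  (y = [] ->
     forall (i : Z) (g h : word S),
       reduced g -> reduced h -> reduced (g ++ z ++ h) ->
       fg_eq (wpow z i) (g ++ z ++ h) ->
       (1 <= i)%Z /\ in_cyclic z g /\ in_cyclic z h)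
  /\
  (y <> [] ->
     forall (i j : Z) (g h : word S),
       reduced g -> reduced h ->
       reduced (g ++ winv y ++ wpow z j ++ y ++ h) ->
       fg_eq (winv y ++ wpow z i ++ y) (g ++ winv y ++ wpow z j ++ y ++ h) ->
       g = [] /\ h = [] /\ i = j).
Proof.
  intros Hy Hz HL Hne Hc NP.
  pose proof (np_nonempty z NP) as Hzne.
  split.
  - intros Ey i g h Hg Hh Hr Heq. subst y.
    destruct (wpow_cases z i) as [[Ei Ew]|[n [b [Hn [Ew Ei]]]]].
    + exfalso. rewrite Ew in Heq. apply fg_reduced_eq in Heq; [|apply reduced_nil|auto].
      symmetry in Heq. apply app_eq_nil in Heq as [_ Heq]. apply app_eq_nil in Heq as [Hz0 _]. contradiction.
    + destruct (zb_facts z b Hc NP) as [HZ [HR [HJ HP]]].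
      rewrite Ew in Heq. apply fg_reduced_eq in Heq; [|apply reduced_pow; auto|auto].
      destruct (occ _ n g z h (eq_sym Heq)) as [k [u [v [E1 [E2 E3]]]]].
      { destruct b; [reflexivity| rewrite winv_length; reflexivity]. }
      destruct b.
      * assert (exists k', g = wpow_nat z k') as [k' Ek].
        { destruct (HP u v E1 (eq_trans E2 eq_refl)) as [-> | ->].
          - exists k. rewrite E3, app_nil_r. reflexivity.
          - exists (Datatypes.S k). rewrite E3, wpow_nat_S_r. rewrite app_nil_r in E1. rewrite <- E1. reflexivity. }
        split; [lia|]. split.
        { exists (Z.of_nat k'). rewrite wpow_of_nat, Ek. apply rst_refl. }
        rewrite Ek in Heq.
        assert (Hle : Datatypes.S k' <= n).
        { apply (f_equal (@length _)) in Heq. rewrite !length_app, !wpow_nat_length in Heq.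
          destruct (Nat.le_gt_cases (Datatypes.S k') n); auto.
          assert (n * length z < Datatypes.S k' * length z) by (apply Nat.mul_lt_mono_pos_r; [destruct z; [congruence|simpl; lia]| lia]).
          simpl in *. lia. }
        replace n with (Datatypes.S k' + (n - Datatypes.S k')) in Heq by lia.
        rewrite wpow_nat_add, wpow_nat_S_r, <- app_assoc in Heq.
        apply app_inv_head in Heq. apply app_inv_head in Heq.
        exists (Z.of_nat (n - Datatypes.S k')). rewrite wpow_of_nat, Heq. apply rst_refl.
      * exfalso. apply (rot_inv z v u); auto.
  - intros Hyne i j g h Hg Hh Hr Heq.
    apply reduced_app_iff in HL as [_ [Hzy Jy]].
    assert (J1 : joinable (winv y) z).
    { apply (joinable_r _ _ (z ++ y)); auto. symmetry; apply headl_app; auto. }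
    apply reduced_app_iff in Hzy as [_ [_ J2]].
    assert (Jb : forall b : bool, joinable (winv y) (if b then z else winv z) /\ joinable (if b then z else winv z) y).
    { destruct b; split; auto. apply joinable_winv; auto.
      pose proof (joinable_winv _ _ J1) as J; rewrite winv_involutive in J; exact J. }
    destruct (wpow_cases z j) as [[Ej Ew]|[m [b' [Hm [Ewj Ej]]]]].
    + exfalso. rewrite Ew in Hr. apply reduced_app_iff in Hr as [_ [Hr _]].
      simpl in Hr. rewrite app_assoc in Hr. apply reduced_app_iff in Hr as [Hr _].
      destruct y as [|a y']; [congruence|]. rewrite winv_cons in Hr.
      apply (Hr (winv y') y' (inv_letter a)). rewrite inv_inv, <- app_assoc. reflexivity.
    + destruct (wpow_cases z i) as [[Ei Ew]|[n [b [Hn [Ew Ei]]]]].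
      * exfalso. rewrite Ew in Heq. apply nf_fg in Heq. rewrite (nf_id _ Hr) in Heq.
        simpl in Heq. rewrite nf_app, (nf_id _ Hy), nf_winv_cancel in Heq by auto.
        destruct y as [|a y']; [congruence|].
        symmetry in Heq. apply app_eq_nil in Heq as [_ Heq]. apply app_eq_nil in Heq as [_ Heq].
        apply app_eq_nil in Heq as [_ Heq]. discriminate.
      * rewrite Ew, Ewj in Heq. rewrite Ewj in Hr.
        destruct (zb_facts z b Hc NP) as [HZ [HR [HJ HP]]].
        destruct (Jb b) as [Jb1 Jb2].
        apply fg_reduced_eq in Heq; [|apply reduced_conj; auto|auto].
        destruct b, b'.
        -- destruct (part2_core y z g h n m Hyne HZ HP Jb1 Jb2 Hm Heq) as [-> [-> ->]]. split; [reflexivity|split; [reflexivity|subst; reflexivity]].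
        -- exfalso. destruct (step123 y z (winv z) g h n m Heq Hm (winv_length z))
             as [e [k [u [v [_ [_ [E3 [E4 _]]]]]]]].
           exact (rot_inv z u v HR HZ E3 E4).
        -- exfalso. destruct (step123 y (winv z) z g h n m Heq Hm ltac:(rewrite winv_length; reflexivity))
             as [e [k [u [v [_ [_ [E3 [E4 _]]]]]]]].
           apply (rot_inv (winv z) u v HR HZ E3). rewrite winv_involutive. exact E4.
        -- destruct (part2_core y (winv z) g h n m Hyne HZ HP Jb1 Jb2 Hm Heq) as [-> [-> ->]]. split; [reflexivity|split; [reflexivity|subst; reflexivity]].
Qed.
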